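(* Let $\underline\rho=(\rho_1,\dots,\rho_\ell)$ be a non-decreasing tuple of integers with $\rho_1\ge2$, and let $n$ be an integer. Then there exists a changemaker vector $\bm\sigma$ with stable coefficients $\underline\rho$ and $\bm\sigma\cdot\bm\sigma=n$ if and only if $n\ge N-1$, where \[ N=\sum_{i=1}^\ell\rho_i^2+\max_{1\le k\le\ell}\Big(\rho_k-\sum_{i=1}^{k-1}\rho_i\Big). \]
   Context: A changemaker vector is a nonzero $\bm\sigma\in\mathbb{Z}^r$ (standard pairing) such that for some orthonormal basis $\bm e_1,\dots,\bm e_r$, $\bm\sigma=\sum\sigma_i\bm e_i$ with $\sigma_1=1$ and $\sigma_{i-1}\le\sigma_i\le1+\sigma_1+\dots+\sigma_{i-1}$ for $i=2,\dots,r$. If $m$ is minimal with $\sigma_m\ge2$, the stable coefficients of $\bm\sigma$ are the tuple $(\sigma_m,\dots,\sigma_r)$. *)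

(* Defs.v *)
From HB Require Import structures.
From mathcomp Require Import all_boot all_order all_algebra.
Set Implicit Arguments. Unset Strict Implicit. Unset Printing Implicit Defensive.
Import Order.TTheory GRing.Theory Num.Theory.
Local Open Scope ring_scope.

Definition dotz (r : nat) (u v : 'rV[int]_r) : int := \sum_(i < r) u 0 i * v 0 i.

(* An orthonormal family of r vectors in Z^r (automatically a basis of Z^r). *)
Definition orthonormal_basis (r : nat) (e : 'I_r -> 'rV[int]_r) : Prop :=
  forall i j : 'I_r, dotz (e i) (e j) = (i == j)%:Z.

Definition changemaker_coeffs (c : seq int) : Prop :=
  (0 < size c)%N /\ c`_0 = 1 /\
  forall i : nat, (0 < i < size c)%N ->
    c`_i.-1 <= c`_i /\ c`_i <= 1 + \sum_(j < i) c`_j.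

Definition changemaker_with (r : nat) (sigma : 'rV[int]_r) (c : seq int) : Prop :=
  sigma != 0 /\ size c = r /\
  exists e : 'I_r -> 'rV[int]_r,
    orthonormal_basis e /\ sigma = \sum_(i < r) c`_i *: e i /\ changemaker_coeffs c.

Definition stable_coeffs (c : seq int) : seq int := drop (find (fun x => 2 <= x) c) c.

Definition bigN (rho : seq int) : int :=
  \sum_(i < size rho) rho`_i ^+ 2 +
  \big[Num.max/rho`_0]_(k < size rho) (rho`_k - \sum_(i < k) rho`_i).

(* Main.v *)
Require Import Defs.
From HB Require Import structures.
From mathcomp Require Import all_boot all_order all_algebra zify.
Import Order.TTheory GRing.Theory Num.Theory.
Local Open Scope ring_scope.

Lemma sum_ord_seq (s : seq int) (F : int -> int) :
  \sum_(i < size s) F s`_i = \sum_(x <- s) F x.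
Proof. by rewrite (big_nth 0) big_mkord. Qed.

Lemma dotz_sum (r : nat) (e : 'I_r -> 'rV[int]_r) (a : 'I_r -> int) (w : 'rV[int]_r) :
  dotz (\sum_i a i *: e i) w = \sum_i a i * dotz (e i) w.
Proof.
rewrite /dotz.
under eq_bigr => k _ do rewrite summxE mulr_suml.
rewrite exchange_big /=; apply: eq_bigr => i _.
rewrite mulr_sumr; apply: eq_bigr => k _; by rewrite mxE mulrA.
Qed.

Lemma dotzC (r : nat) (u v : 'rV[int]_r) : dotz u v = dotz v u.
Proof. by rewrite /dotz; apply: eq_bigr => i _; rewrite mulrC. Qed.

Lemma dotz_ortho (r : nat) (e : 'I_r -> 'rV[int]_r) (c : seq int) :
  orthonormal_basis e ->
  dotz (\sum_(i < r) c`_i *: e i) (\sum_(i < r) c`_i *: e i) = \sum_(i < r) c`_i ^+ 2.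
Proof.
move=> He; rewrite dotz_sum; apply: eq_bigr => i _.
rewrite dotzC dotz_sum (bigD1 i) //= He eqxx big1 ?addr0 ?mulr1 ?expr2 //.
by move=> j /negbTE ji; rewrite He ji mulr0.
Qed.
Lemma cm_ge1 c : changemaker_coeffs c -> forall i, (i < size c)%N -> 1 <= c`_i.
Proof.
move=> [s0 [c0 H]]; elim=> [|i IH] Hi; first by rewrite c0.
have [+ _] := H i.+1 ltac:(lia).
by apply: le_trans; apply: IH; lia.
Qed.

Lemma cm_form (c rho : seq int) : changemaker_coeffs c -> stable_coeffs c = rho ->
  rho != [::] -> exists m : nat, (0 < m)%N /\ c = nseq m 1 ++ rho.
Proof.
move=> Hc Hs Hr; rewrite /stable_coeffs in Hs.
set m := find _ c in Hs.
have Hm : (m < size c)%N.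
  rewrite ltnNge; apply/negP => Hle; move: Hs; rewrite drop_oversize //.
  by move=> E; rewrite -E in Hr.
exists m; split.
  rewrite lt0n; apply/negP => /eqP m0.
  have : has (fun x : int => 2 <= x) c by rewrite has_find -/m Hm.
  move/(nth_find 0); rewrite -/m m0.
  by have [_ [-> _]] := Hc.
rewrite -Hs -[c in LHS](cat_take_drop m); congr (_ ++ _).
apply: (@eq_from_nth _ 0); first by rewrite size_take size_nseq Hm.
move=> i; rewrite size_take Hm => Hi.
rewrite nth_take // nth_nseq Hi.
have := before_find 0 Hi; rewrite -/m => /negbT.
have := @cm_ge1 c Hc _ (ltn_trans Hi Hm).
move: (c`_i) => x; rewrite -ltNge; lia.
Qed.
Lemma nth_cm m (rho : seq int) j :
  (nseq m (1:int) ++ rho)`_j = if (j < m)%N then 1 else rho`_(j - m).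
Proof. rewrite nth_cat size_nseq; case: ifP => H; by rewrite ?nth_nseq ?H. Qed.

Lemma prefix_lo m (rho : seq int) i : (i <= m)%N ->
  \sum_(j < i) (nseq m 1 ++ rho)`_j = i%:R.
Proof.
move=> Hi; rewrite (eq_bigr (fun _ => 1)) ?sumr_const ?card_ord //.
by move=> j _; rewrite nth_cm (leq_trans (ltn_ord j) Hi).
Qed.

Lemma prefix_hi m (rho : seq int) k :
  \sum_(j < m + k) (nseq m 1 ++ rho)`_j = m%:R + \sum_(j < k) rho`_j.
Proof.
rewrite big_split_ord /= prefix_lo //; congr (_ + _).
apply: eq_bigr => j _; rewrite nth_cm /= ltnNge leq_addr /=.
by rewrite addKn.
Qed.

Lemma cm_char (m : nat) (rho : seq int) : rho != [::] -> sorted <=%R rho ->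
  2 <= head 0 rho -> (0 < m)%N ->
  (changemaker_coeffs (nseq m 1 ++ rho) <->
   forall k, (k < size rho)%N -> rho`_k <= 1 + m%:R + \sum_(j < k) rho`_j).
Proof.
move=> Hr Hs Hh Hm; split.
  move=> [_ [_ H]] k Hk.
  have [_] := H (m + k)%N ltac:(rewrite size_cat size_nseq; lia).
  by rewrite prefix_hi nth_cm ltnNge leq_addr /= addKn addrA.
move=> H; split; first by rewrite size_cat size_nseq; lia.
split; first by rewrite nth_cm Hm.
move=> i; rewrite size_cat size_nseq => /andP [Hi0 Hi].
case: (ltnP i m) => Him.
  rewrite !nth_cm Him (ltn_trans _ Him) ?prefix_lo ?ltn_predL //; last exact: ltnW.
  by split=> //; rewrite lerDl.
have [k Ek] : exists k, i = (m + k)%N by exists (i - m)%N; lia.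
subst i.
rewrite prefix_hi (nth_cm m rho (m + k)) ltnNge leq_addr /= addKn addrA; split; last first.
  by apply: H; lia.
rewrite nth_cm; case: ifP => Hk.
  have k0 : k = 0%N by lia.
  subst k; move: Hh; case: rho Hr {H Hs Hi} => //= a s _; lia.
have -> : ((m + k).-1 - m = k.-1)%N by lia.
have := @sorted_leq_nth _ <=%R le_trans lexx 0 rho Hs k.-1 k; rewrite !inE; rewrite ltn_add2l in Hi; apply; rewrite ?(leq_ltn_trans (leq_pred _) Hi) ?leq_pred //.
Qed.

Lemma stable_cm m (rho : seq int) : rho != [::] -> 2 <= head 0 rho ->
  stable_coeffs (nseq m 1 ++ rho) = rho.
Proof.
move=> Hr Hh; rewrite /stable_coeffs find_cat has_nseq /=.
have -> : find (fun x : int => 2 <= x) rho = 0%N.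
  by case: rho Hr Hh => //= a s _ ->.
by rewrite andbF addn0 size_nseq drop_size_cat ?size_nseq.
Qed.

Lemma sumsq_cm m (rho : seq int) :
  \sum_(x <- nseq m 1 ++ rho) x ^+ 2 = m%:R + \sum_(x <- rho) x ^+ 2.
Proof.
rewrite big_cat /=; congr (_ + _).
elim: m => [|m IH]; first by rewrite big_nil.
by rewrite /= big_cons IH expr1n -natr1 addrC.
Qed.

Theorem proposition3p2 (rho : seq int) (n : int) :
  rho != [::] -> sorted <=%R rho -> 2 <= head 0 rho ->
  ((exists (r : nat) (sigma : 'rV[int]_r) (c : seq int),
      changemaker_with sigma c /\ stable_coeffs c = rho /\ dotz sigma sigma = n)
   <-> bigN rho - 1 <= n).
Proof.
move=> Hr Hs Hh.
have Hsz : (0 < size rho)%N by rewrite lt0n size_eq0.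
have Hh0 : 2 <= rho`_0 by rewrite nth0.
rewrite /bigN (sum_ord_seq rho (fun x => x ^+ 2)).
set Q := \sum_(x <- rho) x ^+ 2.
set Mx := \big[Num.max/rho`_0]_(k < size rho) _.
split.
  move=> [r [sigma [c [[nz [sz [e [Ho [Hsig Hc]]]]] [Hst Hn]]]]].
  have [m [Hm Ec]] := @cm_form c rho Hc Hst Hr.
  have Hb := (@cm_char m rho Hr Hs Hh Hm).1 (eq_ind _ _ Hc _ Ec).
  subst r; rewrite Hsig dotz_ortho // (sum_ord_seq c (fun x => x ^+ 2)) Ec sumsq_cm in Hn.
  have HM : Mx <= 1 + m%:R.
    apply: bigmax_le => [|k _].
      by have := Hb 0%N Hsz; rewrite big_ord0 addr0.
    by have := Hb k (ltn_ord k); lia.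
  rewrite -Hn; lia.
move=> Hn.
have H0 : rho`_0 <= Mx.
  by have := le_bigmax rho`_0 (fun k : 'I_(size rho) => rho`_k - \sum_(i < k) rho`_i) (Ordinal Hsz); rewrite big_ord0 subr0.
have Hk : forall k, (k < size rho)%N -> rho`_k - \sum_(i < k) rho`_i <= Mx.
  by move=> k Hk; exact: (le_bigmax rho`_0 (fun k : 'I_(size rho) => rho`_k - \sum_(i < k) rho`_i) (Ordinal Hk)).
pose m := `|n - Q|%N.
have Em : (m%:R : int) = n - Q by rewrite /m; lia.
have Hm : (0 < m)%N by lia.
pose c := nseq m 1 ++ rho.
have Hc : changemaker_coeffs c.
  apply/(@cm_char m rho Hr Hs Hh Hm) => k Hk'; have := Hk k Hk'; lia.
have Hc0 : (0 < size c)%N by rewrite size_cat size_nseq; lia.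
exists (size c), (\row_(i < size c) c`_i), c; split; last split.
- split.
    apply/eqP => /rowP /(_ (Ordinal Hc0)); rewrite !mxE /= /c nth_cm Hm; done.
  split=> //; exists (fun i => delta_mx 0 i); split; last split => //.
    move=> i j; rewrite /dotz (bigD1 i) //= big1 ?addr0.
      by rewrite !mxE !eqxx /= mul1r; case: (i == j).
    by move=> k /negbTE ki; rewrite !mxE /= ki mul0r.
  by rewrite [LHS]row_sum_delta; apply: eq_bigr => i _; rewrite mxE.
- exact: (@stable_cm m rho).
- rewrite /dotz; under eq_bigr do rewrite mxE -expr2.
  rewrite (sum_ord_seq c (fun x => x ^+ 2)) /c sumsq_cm Em; lia.
Qed.
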